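(* For all integers $2\le n\le m$, $\gamma_{2t}(K_n\Box K_m)\ge \min\{m+2,\,2n\}$. Moreover, $\gamma_{2t}(K_n\Box K_m)=2n$ whenever $m\ge 2n-2$.
   Context: For a graph $G=(V,E)$, a set $S\subseteq V$ is a total $2$-dominating set if every vertex of $V$ (including those in $S$) is adjacent to at least $2$ vertices of $S$; $\gamma_{2t}(G)$ is the minimum cardinality of such a set. $G\Box H$ denotes the Cartesian product: vertex set $V(G)\times V(H)$, with $(u_1,v_1)\sim(u_2,v_2)$ iff either $u_1=u_2$ and $v_1\sim v_2$, or $v_1=v_2$ and $u_1\sim u_2$. $K_n$ is the complete graph on $n$ vertices. *)

(* Defs.v *)
From mathcomp Require Import all_boot.
Set Implicit Arguments. Unset Strict Implicit. Unset Printing Implicit Defensive.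

Definition total2dom (T : finType) (adj : rel T) (S : {set T}) : bool :=
  [forall v : T, 2 <= #|[set u in S | adj v u]|].

(* gamma_{2t}: minimum cardinality of a total 2-dominating set
   (default #|T|.+1 if none exists, which never happens in our use). *)
Definition gamma2t (T : finType) (adj : rel T) : nat :=
  \big[minn/#|T|.+1]_(S : {set T} | total2dom adj S) #|S|.

Definition Kadj (n : nat) : rel 'I_n := fun x y => x != y.

Definition cartprod (A B : finType) (adjA : rel A) (adjB : rel B) : rel (A * B) :=
  fun p q => ((p.1 == q.1) && adjB p.2 q.2) || ((p.2 == q.2) && adjA p.1 q.1).

Definition KxK (n m : nat) : rel ('I_n * 'I_m) := cartprod (@Kadj n) (@Kadj m).
Arguments KxK : clear implicits.
Arguments Kadj : clear implicits.

(* Main.v *)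
Require Import Defs.
From mathcomp Require Import all_boot.
From mathcomp Require Import zify.

Set Implicit Arguments. Unset Strict Implicit. Unset Printing Implicit Defensive.

Lemma card_part (T J : finType) (f : T -> J) (S : {set T}) :
  #|S| = \sum_(j : J) #|[set p in S | f p == j]|.
Proof.
rewrite -sum1_card (partition_big f predT) //=.
apply: eq_bigr => j _; rewrite -sum1_card; apply: eq_bigl => p; by rewrite inE.
Qed.

Lemma ordS_neq n (a : 'I_n) : 2 <= n -> ordS a != a.
Proof.
move=> h; apply/eqP => /(congr1 val) /=.
have := ltn_ord a.
case: (ltngtP a.+1 n) => H ha.
- by rewrite modn_small //; lia.
- lia.
- rewrite H modnn; lia.
Qed.

Lemma two_le (T : finType) (X : {set T}) x y : x \in X -> y \in X -> x != y -> 2 <= #|X|.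
Proof.
move=> hx hy hxy; have := cards2 x y; rewrite hxy => <-; apply: subset_leq_card.
by apply/subsetP => z; rewrite !inE => /orP[] /eqP ->.
Qed.

Section LB.
Variables (n m : nat).
Variable S : {set 'I_n * 'I_m}.
Hypothesis hS : total2dom (KxK n m) S.
Let R i := [set p in S | p.1 == i].
Let C j := [set p in S | p.2 == j].

Lemma key v : 2 + 2 * (v \in S) <= #|R v.1| + #|C v.2|.
Proof.
have := forallP hS v.
set N := [set u in S | _].
have sub : N \subset (R v.1 :\ v) :|: (C v.2 :\ v).
  apply/subsetP => u; rewrite !inE /KxK /cartprod /Kadj => /andP[uS].
  case/orP => /andP[/eqP e ne].
  - rewrite uS e eqxx /= andbT; apply/orP; left.
    by apply/negP => /eqP ueq; rewrite ueq eqxx in ne.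
  - rewrite uS e eqxx /= andbT; apply/orP; right.
    by apply/negP => /eqP ueq; rewrite ueq eqxx in ne.
have h1 := subset_leq_card sub.
have h2 := (leq_card_setU (R v.1 :\ v) (C v.2 :\ v)).1.
rewrite (cardsD1 v (R v.1)) (cardsD1 v (C v.2)).
have -> : (v \in R v.1) = (v \in S) by rewrite inE eqxx andbT.
have -> : (v \in C v.2) = (v \in S) by rewrite inE eqxx andbT.
move=> h; have hab := leq_trans h (leq_trans h1 h2); move: hab; generalize #|R v.1 :\ v| #|C v.2 :\ v| => a b; case: (v \in S) => /=; lia.
Qed.

Lemma lower : 2 <= m -> minn (m + 2) (2 * n) <= #|S|.
Proof.
move=> hm.
case: (boolP [forall i, 2 <= #|R i|]) => [/forallP hall | ].
  rewrite (card_part (fun p => p.1)).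
  apply: leq_trans (geq_minr _ _) _.
  apply: leq_trans (_ : \sum_(i : 'I_n) 2 <= _); last by apply: leq_sum => i _; exact: hall.
  by rewrite sum_nat_const card_ord mulnC.
rewrite negb_forall => /existsP [i]; rewrite -ltnNge ltnS => hi.
apply: leq_trans (geq_minl _ _) _.
rewrite (card_part (fun p => p.2)).
have hC : forall j, 2 + 2 * ((i, j) \in S) <= #|R i| + #|C j| := fun j => key (i, j).
case: (boolP (#|R i| == 1)) => [/cards1P [v0 Rv0] | hne].
- have : v0 \in R i by rewrite Rv0 set11.
  rewrite inE => /andP [v0S /eqP v01].
  rewrite (bigD1 v0.2) //=.
  have h3 : 3 <= #|C v0.2|.
    have := hC v0.2; rewrite Rv0 cards1 -v01 -surjective_pairing v0S; lia.
  have h4 : \sum_(j | j != v0.2) 1 <= \sum_(j | j != v0.2) #|C j|.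
    apply: leq_sum => j _; have := hC j; rewrite Rv0 cards1; lia.
  move: h4; rewrite sum1_card cardC1 card_ord.
  move=> h4; apply: leq_trans (leq_add h3 h4); lia.
- have hR0 : #|R i| = 0 by lia.
  apply: leq_trans (_ : \sum_(j : 'I_m) 2 <= _); last first.
    apply: leq_sum => j _; have := hC j; rewrite hR0 add0n; apply: leq_trans; exact: leq_addr.
  rewrite sum_nat_const card_ord; lia.
Qed.

End LB.

Lemma bigmin_le (I : eqType) (r : seq I) (P : pred I) (F : I -> nat) x j :
  j \in r -> P j -> \big[minn/x]_(i <- r | P i) F i <= F j.
Proof.
elim: r => // a r IH; rewrite inE big_cons => /orP [/eqP <- -> | hj hP].
  exact: geq_minl.
case: (P a); last exact: IH.
exact: leq_trans (geq_minr _ _) (IH hj hP).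
Qed.

Section UB.
Variables (n m : nat) (h2n : 2 <= n) (hnm : n <= m).
Let w := widen_ord hnm.
Definition S0 : {set 'I_n * 'I_m} :=
  [set (i, w i) | i : 'I_n] :|: [set (i, w (ordS i)) | i : 'I_n].

Lemma S0a i : (i, w i) \in S0.
Proof. by apply/setUP; left; apply/imsetP; exists i. Qed.
Lemma S0b i : (i, w (ordS i)) \in S0.
Proof. by apply/setUP; right; apply/imsetP; exists i. Qed.

Lemma w_inj : injective w.
Proof. by move=> x y /(congr1 val) /= e; apply: val_inj. Qed.

Lemma S0_card : #|S0| <= 2 * n.
Proof.
apply: leq_trans (leq_card_setU _ _).1 _.
rewrite mul2n -addnn; apply: leq_add;
  apply: leq_trans (leq_imset_card _ _) _; by rewrite card_ord.
Qed.

Lemma S0_dom : total2dom (KxK n m) S0.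
Proof.
apply/forallP => [[a b]].
have hS := ordS_neq a h2n.
have wS : w a != w (ordS a) by apply/negP => /eqP /w_inj /eqP; rewrite eq_sym (negbTE hS).
case: (eqVneq b (w a)) => [-> | hb1].
  apply: (@two_le _ _ (a, w (ordS a)) (ord_pred a, w a)).
  - by rewrite inE S0b /KxK /cartprod /Kadj /= eqxx wS.
  - rewrite inE /KxK /cartprod /Kadj /=.
    have -> : (ord_pred a, w a) = (ord_pred a, w (ordS (ord_pred a))) by rewrite ord_predK.
    rewrite S0b /= eqxx /= orbC.
    apply/orP; left; apply/negP => /eqP e.
    by move: hS; rewrite {1}e ord_predK eqxx.
  - by rewrite xpair_eqE negb_and [w (ordS a) == _]eq_sym wS orbT.
case: (eqVneq b (w (ordS a))) => [-> | hb2].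
  apply: (@two_le _ _ (a, w a) (ordS a, w (ordS a))).
  - by rewrite inE S0a /KxK /cartprod /Kadj /= eqxx eq_sym wS.
  - by rewrite inE S0a /KxK /cartprod /Kadj /= eqxx eq_sym hS orbT.
  - by rewrite xpair_eqE negb_and eq_sym hS.
apply: (@two_le _ _ (a, w a) (a, w (ordS a))).
- by rewrite inE S0a /KxK /cartprod /Kadj /= eqxx hb1.
- by rewrite inE S0b /KxK /cartprod /Kadj /= eqxx hb2.
- by rewrite xpair_eqE negb_and wS orbT.
Qed.
End UB.


Theorem proposition4 (n m : nat) (h2n : 2 <= n) (hnm : n <= m) :
  minn (m + 2) (2 * n) <= gamma2t (KxK n m) /\
  ((2 * n) - 2 <= m -> gamma2t (KxK n m) = (2 * n)).
Proof.
have hm : 2 <= m by apply: leq_trans hnm.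
have low : minn (m + 2) (2 * n) <= gamma2t (KxK n m).
  rewrite /gamma2t; apply: (big_ind (fun x => minn (m + 2) (2 * n) <= x)).
  - apply: leq_trans (geq_minr _ _) _.
    rewrite card_prod !card_ord; apply: leq_trans (leqnSn _); nia.
  - by move=> x y hx hy; rewrite leq_min hx hy.
  - by move=> S hS; exact: lower.
split => // h.
apply/eqP; rewrite eqn_leq; apply/andP; split.
  apply: leq_trans (@S0_card n m hnm).
  rewrite /gamma2t; apply: (@bigmin_le _ _ _ (fun S : {set _} => #|S|)); [exact: mem_index_enum | exact: S0_dom].
move: low; have -> : minn (m + 2) (2 * n) = 2 * n by apply/minn_idPr; lia.
by [].
Qed.
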